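(* Suppose the family of update functions $\mathrm{Upd}$ satisfies P1–P5 and that $\mathrm{Upd}^{\mathcal{M}}(\Pr,B)=\emptyset$ for some measure space $\mathcal{M}=(W,\mathcal{F})$, some $\Pr\in\Delta_{\mathcal{M}}$ and some $B\in\mathcal{F}$ with $\Pr(B)\ne0$. Then $\mathrm{Upd}=\mathrm{Upd}_{\mathrm{constrain}}$.
   Context: A measure space is a pair $\mathcal{M}=(W,\mathcal{F})$ with $\mathcal{F}$ an algebra of subsets of $W$; $\Delta_{\mathcal{M}}$ is the set of all probability measures on $\mathcal{M}$. An update function on $\mathcal{M}$ is a map $\mathrm{Upd}^{\mathcal{M}}:2^{\Delta_{\mathcal{M}}}\times\mathcal{F}\to 2^{\Delta_{\mathcal{M}}}$ such that $\mathrm{Upd}^{\mathcal{M}}(X,B)=\emptyset$ whenever $\Pr(B)=0$ for all $\Pr\in X$; $\mathrm{Upd}^{\mathcal{M}}(\Pr,B)$ means $\mathrm{Upd}^{\mathcal{M}}(\{\Pr\},B)$. A family $\mathrm{Upd}=\{\mathrm{Upd}^{\mathcal{M}}\}$ has one update function for each measure space. $\mathrm{Upd}_{\mathrm{constrain}}^{\mathcal{M}}(X,B)=\{\Pr\in X:\Pr(B)=1\}$. A representation shift from $\mathcal{M}=(W,\mathcal{F})$ to $\mathcal{M}'=(W',\mathcal{F}')$ is a surjection $f:W\to W'$ with $f^{-1}(B)\in\mathcal{F}$ for all $B\in\mathcal{F}'$; $(f^*(\Pr))(A)=\Pr(f^{-1}(A))$, $f^*(X)=\{f^*(\Pr):\Pr\in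 X\}$. Postulates (for all $\mathcal{M}=(W,\mathcal{F})$, $X\subseteq\Delta_{\mathcal{M}}$, $B,C\in\mathcal{F}$ unless stated otherwise): P1: $\mathrm{Upd}^{\mathcal{M}}(X,B)\subseteq\{\Pr\in\Delta_{\mathcal{M}}:\Pr(B)=1\}$. P2: for every representation shift $f$ from $\mathcal{M}$ to $\mathcal{M}'=(W',\mathcal{F}')$, $X\subseteq\Delta_{\mathcal{M}}$, $B\in\mathcal{F}'$: $\mathrm{Upd}^{\mathcal{M}'}(f^*(X),B)=f^*(\mathrm{Upd}^{\mathcal{M}}(X,f^{-1}(B)))$. P3: $\mathrm{Upd}^{\mathcal{M}}(\mathrm{Upd}^{\mathcal{M}}(X,B),C)=\mathrm{Upd}^{\mathcal{M}}(X,B\cap C)$. P4: $\mathrm{Upd}^{\mathcal{M}}(X,B)=X$ if $\Pr(B)=1$ for all $\Pr\in X$. P5: $\mathrm{Upd}^{\mathcal{M}}(X,B)=\bigcup_{\Pr\in X}\mathrm{Upd}^{\mathcal{M}}(\Pr,B)$. *)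

(* Defs.v *)
From Stdlib Require Import Reals Lra FunctionalExtensionality PropExtensionality.
Open Scope R_scope.

Definition set (T : Type) := T -> Prop.
Definition emptyset {T : Type} : set T := fun _ => False.

Record is_algebra (W : Type) (F : set (set W)) : Prop := {
  alg_full : F (fun _ => True);
  alg_compl : forall A, F A -> F (fun w => ~ A w);
  alg_union : forall A B, F A -> F B -> F (fun w => A w \/ B w)
}.

Record mspace := MSpace {
  carrier : Type;
  events : set (set carrier);
  events_algebra : is_algebra carrier events
}.

Definition event (M : mspace) := { A : set (carrier M) | events M A }.
Definition ev_set {M : mspace} (A : event M) : set (carrier M) := proj1_sig A.

Record prob (M : mspace) := Prob {
  pr :> event M -> R;
  pr_nonneg : forall A, 0 <= pr A;
  pr_total : forall A : event M, (forall w, ev_set A w) -> pr A = 1;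
  pr_add : forall A B C : event M,
      (forall w, ~ (ev_set A w /\ ev_set B w)) ->
      (forall w, ev_set C w <-> ev_set A w \/ ev_set B w) ->
      pr C = pr A + pr B
}.
Arguments pr {M}.

(* Delta_M is the type prob M; subsets of Delta_M are  set (prob M). *)

Lemma events_inter (M : mspace) (B C : set (carrier M)) :
  events M B -> events M C -> events M (fun w => B w /\ C w).
Proof.
  intros hB hC. destruct (events_algebra M) as [hF hc hu].
  assert (E : (fun w => B w /\ C w) = (fun w => ~ ((fun w => ~ B w \/ ~ C w) w))).
  { apply functional_extensionality; intro w; apply propositional_extensionality.
    simpl. split.
    - intros [b c] [nb|nc]; auto.
    - intros H. split; apply Classical_Prop.NNPP; intro; apply H; auto. }
  rewrite E. apply hc. apply hu; apply hc; assumption.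
Qed.

Definition ev_inter {M : mspace} (B C : event M) : event M :=
  exist _ (fun w => ev_set B w /\ ev_set C w)
        (events_inter M _ _ (proj2_sig B) (proj2_sig C)).

Definition upd_family := forall M : mspace, set (prob M) -> event M -> set (prob M).

Definition singleton {T : Type} (x : T) : set T := fun y => y = x.

Definition is_update_family (Upd : upd_family) : Prop :=
  forall (M : mspace) (X : set (prob M)) (B : event M),
    (forall P, X P -> P B = 0) -> Upd M X B = emptyset.

Definition Upd_constrain : upd_family :=
  fun M X B => fun P => X P /\ P B = 1.

Definition measurable_map (M M' : mspace) (f : carrier M -> carrier M') : Prop :=
  forall B, events M' B -> events M (fun w => B (f w)).

Definition surjective {A B : Type} (f : A -> B) : Prop := forall b, exists a, f a = b.

Definition preimage_ev {M M' : mspace} (f : carrier M -> carrier M')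
  (hf : measurable_map M M' f) (B : event M') : event M :=
  exist _ (fun w => ev_set B (f w)) (hf _ (proj2_sig B)).

Section Push.
Variables (M M' : mspace) (f : carrier M -> carrier M') (hf : measurable_map M M' f).
Variable P : prob M.

Definition push_fun (A : event M') : R := P (preimage_ev f hf A).

Lemma push_nonneg : forall A, 0 <= push_fun A.
Proof. intro A; apply pr_nonneg. Qed.

Lemma push_total : forall A : event M', (forall w, ev_set A w) -> push_fun A = 1.
Proof. intros A H; apply pr_total; intro w; apply H. Qed.

Lemma push_add : forall A B C : event M',
    (forall w, ~ (ev_set A w /\ ev_set B w)) ->
    (forall w, ev_set C w <-> ev_set A w \/ ev_set B w) ->
    push_fun C = push_fun A + push_fun B.
Proof. intros A B C H1 H2; apply pr_add; intro w; [apply H1 | apply H2]. Qed.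

Definition pushforward : prob M' := Prob M' push_fun push_nonneg push_total push_add.
End Push.

Definition push_set {M M' : mspace} (f : carrier M -> carrier M')
  (hf : measurable_map M M' f) (X : set (prob M)) : set (prob M') :=
  fun Q => exists P, X P /\ Q = pushforward M M' f hf P.

Definition P1 (Upd : upd_family) : Prop :=
  forall M X B P, Upd M X B P -> pr P B = 1.

Definition P2 (Upd : upd_family) : Prop :=
  forall (M M' : mspace) (f : carrier M -> carrier M') (hf : measurable_map M M' f),
    surjective f ->
    forall (X : set (prob M)) (B : event M'),
      Upd M' (push_set f hf X) B = push_set f hf (Upd M X (preimage_ev f hf B)).

Definition P3 (Upd : upd_family) : Prop :=
  forall M X (B C : event M), Upd M (Upd M X B) C = Upd M X (ev_inter B C).

Definition P4 (Upd : upd_family) : Prop :=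
  forall M X (B : event M), (forall P, X P -> P B = 1) -> Upd M X B = X.

Definition P5 (Upd : upd_family) : Prop :=
  forall M X (B : event M),
    Upd M X B = (fun Q => exists P, X P /\ Upd M (singleton P) B Q).

(* Main.v *)
Require Import Defs.
From Stdlib Require Import Reals Lra Lia FunctionalExtensionality PropExtensionality ProofIrrelevance ClassicalEpsilon Classical.
Open Scope R_scope.

Lemma ev_ext (M : mspace) (A A' : event M) :
  (forall w, ev_set A w <-> ev_set A' w) -> A = A'.
Proof.
  destruct A as [a ha], A' as [a' ha']; simpl; intro H.
  assert (a = a') by (apply functional_extensionality; intro; apply propositional_extensionality; auto).
  subst. f_equal. apply proof_irrelevance.
Qed.

Lemma prob_ext (M : mspace) (P Q : prob M) : (forall A, P A = Q A) -> P = Q.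
Proof.
  destruct P as [p a b c], Q as [q a' b' c']; simpl; intro H.
  assert (p = q) by (apply functional_extensionality; auto).
  subst. f_equal; apply proof_irrelevance.
Qed.

Lemma prob_empty (M : mspace) (P : prob M) (A : event M) :
  (forall w, ~ ev_set A w) -> P A = 0.
Proof.
  intro H. pose proof (pr_add M P A A A) as E.
  assert (P A = P A + P A) by (apply E; intro w; [intros [h _]; exact (H w h)| tauto]).
  lra.
Qed.

Lemma prob_eqset (M : mspace) (P : prob M) (A A' : event M) :
  (forall w, ev_set A w <-> ev_set A' w) -> P A = P A'.
Proof. intro H; rewrite (ev_ext M A A' H); reflexivity. Qed.

Definition ev_full (M : mspace) : event M :=
  exist _ (fun _ => True) (alg_full _ _ (events_algebra M)).
Definition ev_compl (M : mspace) (A : event M) : event M :=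
  exist _ (fun w => ~ ev_set A w) (alg_compl _ _ (events_algebra M) _ (proj2_sig A)).

Lemma prob_compl (M : mspace) (P : prob M) (A : event M) :
  P (ev_compl M A) = 1 - P A.
Proof.
  assert (P (ev_full M) = P A + P (ev_compl M A)).
  { apply pr_add; intro w; simpl; tauto. }
  rewrite (pr_total M P (ev_full M)) in H by (intro; exact I). lra.
Qed.

Lemma prob_le1 (M : mspace) (P : prob M) (A : event M) : P A <= 1.
Proof. pose proof (prob_compl M P A); pose proof (pr_nonneg M P (ev_compl M A)); lra. Qed.

Fixpoint sumn (f : nat -> R) (k : nat) : R :=
  match k with O => 0 | S k => sumn f k + f k end.

Lemma sumn_ext f g k : (forall j, (j < k)%nat -> f j = g j) -> sumn f k = sumn g k.
Proof.
  induction k; simpl; intro H; auto.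
  rewrite IHk by (intros; apply H; lia). rewrite H by lia. auto.
Qed.

Lemma sumn_plus f g k : sumn (fun j => f j + g j) k = sumn f k + sumn g k.
Proof. induction k; simpl; [lra| rewrite IHk; lra]. Qed.

Lemma sumn_nonneg f k : (forall j, 0 <= f j) -> 0 <= sumn f k.
Proof. intro H; induction k; simpl; [lra| specialize (H k); lra]. Qed.

Lemma sumn_const c k : sumn (fun _ => c) k = INR k * c.
Proof. induction k; simpl sumn; [simpl; lra| rewrite IHk, S_INR; lra]. Qed.

Lemma sumn_lt f r k : (forall j, (j < k)%nat -> r < f j) -> INR k * r <= sumn f k.
Proof.
  induction k; intro H; simpl sumn; [simpl; lra|].
  rewrite S_INR. assert (r < f k) by (apply H; lia).
  assert (INR k * r <= sumn f k) by (apply IHk; intros; apply H; lia). lra.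
Qed.

Lemma sumn_lt_strict f r k : (0 < k)%nat -> (forall j, (j < k)%nat -> r < f j) -> INR k * r < sumn f k.
Proof.
  destruct k; intros hk H; [lia|]. simpl sumn. rewrite S_INR.
  assert (r < f k) by (apply H; lia).
  assert (INR k * r <= sumn f k) by (apply sumn_lt; intros; apply H; lia). lra.
Qed.

Definition full_alg (T : Type) : is_algebra T (fun _ => True) :=
  {| alg_full := I; alg_compl := fun _ _ => I; alg_union := fun _ _ _ _ => I |}.

Definition Mnat : mspace := MSpace nat (fun _ => True) (full_alg nat).
Definition Mbool : mspace := MSpace bool (fun _ => True) (full_alg bool).

Definition evn (A : set nat) : event Mnat := exist _ A I.

Definition indR (A : Prop) (r : R) : R := if excluded_middle_informative A then r else 0.

Section W.
Variables (w : nat -> R) (N : nat) (hnn : forall j, 0 <= w j) (htot : sumn w N = 1).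

Definition wfun (A : event Mnat) : R := sumn (fun j => indR (ev_set A j) (w j)) N.

Lemma wfun_nonneg A : 0 <= wfun A.
Proof. apply sumn_nonneg; intro j; unfold indR; destruct excluded_middle_informative; auto; lra. Qed.

Lemma wfun_total (A : event Mnat) : (forall x, ev_set A x) -> wfun A = 1.
Proof.
  intro H; unfold wfun; rewrite <- htot; apply sumn_ext; intros j _.
  unfold indR; destruct excluded_middle_informative; auto. exfalso; auto.
Qed.

Lemma wfun_add (A B C : event Mnat) :
  (forall x, ~ (ev_set A x /\ ev_set B x)) ->
  (forall x, ev_set C x <-> ev_set A x \/ ev_set B x) ->
  wfun C = wfun A + wfun B.
Proof.
  intros H1 H2; unfold wfun; rewrite <- sumn_plus; apply sumn_ext; intros j _.
  unfold indR; specialize (H1 j); specialize (H2 j).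
  destruct (excluded_middle_informative (ev_set C j)), (excluded_middle_informative (ev_set A j)),
    (excluded_middle_informative (ev_set B j)); try lra; tauto.
Qed.

Definition wprob : prob Mnat := Prob Mnat wfun wfun_nonneg wfun_total wfun_add.
End W.

Lemma sum_single_zero w i k : (k <= i)%nat -> sumn (fun j => indR (j = i) (w j)) k = 0.
Proof.
  induction k; intro h; simpl; auto.
  rewrite IHk by lia. unfold indR; destruct excluded_middle_informative; [lia| lra].
Qed.

Lemma sum_single w i k : (i < k)%nat -> sumn (fun j => indR (j = i) (w j)) k = w i.
Proof.
  induction k; intro h; [lia|]. simpl.
  destruct (Nat.eq_dec i k).
  - subst. rewrite sum_single_zero by lia. unfold indR; destruct excluded_middle_informative; [lra| tauto].
  - rewrite IHk by lia. unfold indR; destruct (excluded_middle_informative (k = i)); [lia| lra].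
Qed.

Lemma wprob_single w N h1 h2 i : (i < N)%nat -> wprob w N h1 h2 (evn (fun j => j = i)) = w i.
Proof. intro h; simpl; unfold wfun; simpl; apply sum_single; auto. Qed.

Lemma prob_below (Q : prob Mnat) k :
  Q (evn (fun j => (j < k)%nat)) = sumn (fun j => Q (evn (fun i => i = j))) k.
Proof.
  induction k; simpl.
  - apply prob_empty; simpl; lia.
  - rewrite <- IHk. apply pr_add; simpl; intros; lia.
Qed.

Definition fB {M : mspace} (B : event M) (w : carrier M) : bool :=
  if excluded_middle_informative (ev_set B w) then true else false.

Lemma fB_true {M} (B : event M) w : fB B w = true <-> ev_set B w.
Proof. unfold fB; destruct excluded_middle_informative; split; intuition discriminate. Qed.
Lemma fB_false {M} (B : event M) w : fB B w = false <-> ~ ev_set B w.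
Proof. unfold fB; destruct excluded_middle_informative; split; intuition discriminate. Qed.

Lemma setext {T} (A B : T -> Prop) : (forall x, A x <-> B x) -> A = B.
Proof. intro H; apply functional_extensionality; intro; apply propositional_extensionality; auto. Qed.

Lemma fB_meas {M} (B : event M) : measurable_map M Mbool (fB B).
Proof.
  intros B' _. pose proof (events_algebra M) as HA.
  destruct (classic (B' true)) as [ht|ht], (classic (B' false)) as [hf|hf].
  - replace (fun w => B' (fB B w)) with (fun _ : carrier M => True).
    + apply (alg_full _ _ HA).
    + apply setext; intro w; destruct (fB B w); tauto.
  - replace (fun w => B' (fB B w)) with (ev_set B).
    + apply (proj2_sig B).
    + apply setext; intro w; pose proof (fB_true B w); pose proof (fB_false B w);
      destruct (fB B w); intuition congruence.
  - replace (fun w => B' (fB B w)) with (fun w => ~ ev_set B w).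
    + apply (alg_compl _ _ HA), (proj2_sig B).
    + apply setext; intro w; pose proof (fB_true B w); pose proof (fB_false B w);
      destruct (fB B w); intuition congruence.
  - replace (fun w => B' (fB B w)) with (fun _ : carrier M => ~ True).
    + apply (alg_compl _ _ HA), (alg_full _ _ HA).
    + apply setext; intro w; destruct (fB B w); tauto.
Qed.

Lemma push_val {M} (P : prob M) (B : event M) (hf : measurable_map M Mbool (fB B)) A :
  pushforward M Mbool (fB B) hf P A =
  indR (ev_set A true) (P B) + indR (ev_set A false) (1 - P B).
Proof.
  simpl; unfold push_fun, indR.
  destruct (excluded_middle_informative (ev_set A true)) as [ht|ht],
    (excluded_middle_informative (ev_set A false)) as [hf'|hf'].
  - rewrite pr_total; [lra|]. intro w; simpl; destruct (fB B w); auto.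
  - rewrite (prob_eqset M P _ B); [lra|]. intro w; simpl;
      pose proof (fB_true B w); pose proof (fB_false B w); destruct (fB B w); intuition congruence.
  - rewrite (prob_eqset M P _ (ev_compl M B)); [rewrite prob_compl; lra|]. intro w; simpl;
      pose proof (fB_true B w); pose proof (fB_false B w); destruct (fB B w); intuition congruence.
  - rewrite prob_empty; [lra|]. intro w; simpl; destruct (fB B w); auto.
Qed.

Lemma fB_surj {M} (P : prob M) (B : event M) : 0 < P B < 1 -> surjective (fB B).
Proof.
  intros [h0 h1] b. destruct b.
  - apply NNPP; intro H. assert (P B = 0); [|lra]. apply prob_empty; intros w hw.
    apply H; exists w; apply fB_true; auto.
  - apply NNPP; intro H. assert (P B = 1); [|lra]. apply pr_total; intro w.
    apply NNPP; intro hw; apply H; exists w; apply fB_false; auto.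
Qed.

Definition b0 : event Mbool := exist _ (fun t => t = true) I.

Lemma transfer (Upd : upd_family) (H2 : P2 Upd) M (P : prob M) B M' (P' : prob M') B' :
  0 < P B < 1 -> P B = P' B' -> (exists Q, Upd M (singleton P) B Q) ->
  exists Q, Upd M' (singleton P') B' Q.
Proof.
  intros hP heq [Q hQ].
  assert (hP' : 0 < P' B' < 1) by lra.
  pose proof (H2 M Mbool (fB B) (fB_meas B) (fB_surj P B hP) (singleton P) b0) as E1.
  pose proof (H2 M' Mbool (fB B') (fB_meas B') (fB_surj P' B' hP') (singleton P') b0) as E2.
  assert (pre1 : @preimage_ev M Mbool (fB B) (fB_meas B) b0 = B).
  { apply ev_ext; intro w; simpl; apply fB_true. }
  assert (pre2 : @preimage_ev M' Mbool (fB B') (fB_meas B') b0 = B').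
  { apply ev_ext; intro w; simpl; apply fB_true. }
  rewrite pre1 in E1; rewrite pre2 in E2.
  assert (S1 : @push_set M Mbool (fB B) (fB_meas B) (singleton P) =
               @push_set M' Mbool (fB B') (fB_meas B') (singleton P')).
  { apply setext; intro R; unfold push_set, singleton; split.
    - intros [P0 [-> ->]]. exists P'; split; auto. apply prob_ext; intro A.
      rewrite !push_val, heq; reflexivity.
    - intros [P0 [-> ->]]. exists P; split; auto. apply prob_ext; intro A.
      rewrite !push_val, heq; reflexivity. }
  assert (hin : Upd Mbool (@push_set M Mbool (fB B) (fB_meas B) (singleton P)) b0
                 (pushforward M Mbool (fB B) (fB_meas B) Q)).
  { rewrite E1. exists Q; split; auto. }
  rewrite S1, E2 in hin. destruct hin as [Q' [hQ' _]]. exists Q'; exact hQ'.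
Qed.

Definition Sd (Upd : upd_family) (z : R) : Prop :=
  exists (M : mspace) (P : prob M) (B : event M), P B = z /\ exists Q, Upd M (singleton P) B Q.

Lemma upclose (Upd : upd_family) (His : is_update_family Upd) (H2 : P2 Upd) (H3 : P3 Upd)
  z w : Sd Upd z -> 0 < z -> z <= w -> w < 1 -> Sd Upd w.
Proof.
  intros hz z0 zw w1. destruct (Req_dec z w) as [->|hne]; auto.
  apply NNPP; intro hn.
  set (wt := fun j : nat => match j with 0%nat => z | 1%nat => w - z | 2%nat => 1 - w | _ => 0 end).
  assert (hnn : forall j, 0 <= wt j) by (intros [|[|[|j]]]; simpl; lra).
  assert (htot : sumn wt 3 = 1) by (simpl; lra).
  set (P := wprob wt 3 hnn htot).
  set (Bb := evn (fun j => (j < 2)%nat)). set (A := evn (fun j => (j < 1)%nat)).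
  assert (PA : P A = z).
  { unfold P, A; rewrite prob_below, (sumn_ext _ wt); [simpl; lra| intros; apply wprob_single; lia]. }
  assert (PB : P Bb = w).
  { unfold P, Bb; rewrite prob_below, (sumn_ext _ wt); [simpl; lra| intros; apply wprob_single; lia]. }
  assert (E1 : Upd Mnat (singleton P) Bb = emptyset).
  { apply setext; intro Q; split; [intro hQ|intros []]. apply hn. exists Mnat, P, Bb; eauto. }
  pose proof (H3 Mnat (singleton P) Bb A) as E3. rewrite E1 in E3.
  rewrite (His Mnat emptyset A (fun _ h => False_ind _ h)) in E3.
  assert (ei : ev_inter Bb A = A) by (apply ev_ext; simpl; intros; lia).
  rewrite ei in E3.
  destruct hz as [M0 [P0 [B0 [h0 hQ]]]].
  assert (hr : 0 < P0 B0 < 1) by lra.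
  destruct (transfer Upd H2 M0 P0 B0 Mnat P A hr ltac:(lra) hQ) as [Q hQ'].
  rewrite <- E3 in hQ'. exact hQ'.
Qed.

Lemma P4' (Upd : upd_family) (H4 : P4 Upd) M (X : set (prob M)) (B : event M) :
  (forall P, X P -> P B = 1) -> Upd M X B = X.
Proof.
  intro H.
  set (X0 := fun f : event M -> R => exists P, X P /\ pr P = f).
  assert (E : (fun x : prob M => X0 x) = X).
  { apply setext; intro x; split.
    - intros [P [hP e]]. replace x with P; auto. apply prob_ext; intro A; rewrite e; auto.
    - intro hx; exists x; auto. }
  pose proof (H4 M X0 B) as E4. rewrite E in E4. apply E4.
  intros f [P [hP <-]]; auto.
Qed.

Lemma keylemma (Upd : upd_family) (His : is_update_family Upd) (H1 : P1 Upd) (H2 : P2 Upd)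
  (H3 : P3 Upd) (H4 : P4 Upd) (H5 : P5 Upd) (a : R)
  (ha : 0 < a < 1 /\ ~ Sd Upd a) (c : R) (hc : 0 < c < 1) (Sc : Sd Upd c) : False.
Proof.
  set (E := fun z => 0 < z < 1 /\ ~ Sd Upd z).
  assert (bnd : forall z, E z -> z <= c).
  { intros z [hz hnz]. apply Rnot_lt_le; intro hlt. apply hnz.
    apply (upclose Upd His H2 H3 c z Sc); lra. }
  destruct (completeness E (ex_intro _ c bnd) (ex_intro _ a ha)) as [s [sub slub]].
  assert (sa : a <= s) by (apply sub; exact ha).
  assert (sc : s <= c) by (apply slub; exact bnd).
  destruct (INR_archimed 1 (s / (1 - s)) ltac:(lra)) as [n0 hn0].
  set (m := S n0). set (mR := INR m).
  assert (mpos : 1 <= mR) by (unfold mR, m; rewrite S_INR; pose proof (pos_INR n0); lra).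
  assert (hsm : s * (mR + 1) < mR).
  { assert (s / (1 - s) < mR) by (unfold mR, m; rewrite S_INR; lra).
    assert (s < mR * (1 - s)).
    { apply (Rmult_lt_compat_r (1 - s)) in H; [|lra].
      replace (s / (1 - s) * (1 - s)) with s in H by (field; lra). lra. }
    lra. }
  assert (exx : exists x, E x /\ s * mR / (mR + 1) < x).
  { apply NNPP; intro hn. assert (s <= s * mR / (mR + 1)).
    { apply slub; intros z hz. apply Rnot_lt_le; intro hlt; apply hn; eauto. }
    assert (s * mR / (mR + 1) < s); [|lra].
    apply (Rmult_lt_reg_r (mR + 1)); [lra|].
    replace (s * mR / (mR + 1) * (mR + 1)) with (s * mR) by (field; lra). nra. }
  destruct exx as [x [[hx hnx] hxs]].
  assert (xs : x <= s) by (apply sub; split; auto).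
  set (y := (mR + 1) * (x / mR)).
  assert (ys : s < y).
  { unfold y. apply (Rmult_lt_compat_r (mR + 1)) in hxs; [|lra].
    replace (s * mR / (mR + 1) * (mR + 1)) with (s * mR) in hxs by (field; lra).
    replace ((mR + 1) * (x / mR)) with (x * (mR + 1) / mR) by (field; lra).
    apply (Rmult_lt_reg_r mR); [lra|].
    replace (x * (mR + 1) / mR * mR) with (x * (mR + 1)) by (field; lra).
    lra. }
  assert (y1 : y < 1).
  { unfold y. replace ((mR + 1) * (x / mR)) with (x * (mR + 1) / mR) by (field; lra).
    apply (Rmult_lt_reg_r mR); [lra|].
    replace (x * (mR + 1) / mR * mR) with (x * (mR + 1)) by (field; lra). nra. }
  assert (s0 : 0 < s) by lra.
  assert (Sy : Sd Upd y).
  { apply NNPP; intro hn. assert (y <= s); [apply sub; split; [lra|auto]|lra]. }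
  set (wt := fun j : nat => if (j <=? m)%nat then x / mR else if (j =? S m)%nat then 1 - y else 0).
  assert (hnn : forall j, 0 <= wt j).
  { intro j; unfold wt. destruct (j <=? m)%nat.
    - unfold Rdiv; apply Rmult_le_pos; [lra| left; apply Rinv_0_lt_compat; lra].
    - destruct (j =? S m)%nat; lra. }
  assert (sumB : sumn wt (S m) = y).
  { rewrite (sumn_ext _ (fun _ => x / mR)).
    - rewrite sumn_const. unfold y. rewrite S_INR. fold mR. lra.
    - intros j hj. unfold wt. replace (j <=? m)%nat with true; auto.
      symmetry; apply Nat.leb_le; lia. }
  assert (htot : sumn wt (S (S m)) = 1).
  { change (sumn wt (S (S m))) with (sumn wt (S m) + wt (S m)). rewrite sumB. unfold wt.
    replace (S m <=? m)%nat with false by (symmetry; apply Nat.leb_gt; lia).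
    rewrite Nat.eqb_refl. lra. }
  set (P := wprob wt (S (S m)) hnn htot).
  assert (Psing : forall j, (j < S (S m))%nat -> P (evn (fun i => i = j)) = wt j).
  { intros; unfold P; apply wprob_single; auto. }
  set (Bb := evn (fun j => (j < S m)%nat)).
  assert (PB : P Bb = y).
  { unfold Bb; rewrite prob_below, <- sumB. apply sumn_ext; intros; apply Psing; lia. }
  destruct Sy as [M0 [P0 [B0 [h0 hQ0]]]].
  destruct (transfer Upd H2 M0 P0 B0 Mnat P Bb ltac:(lra) ltac:(lra) hQ0) as [Q hQ].
  assert (QB : Q Bb = 1) by (eapply H1; eauto).
  set (Ai := fun i => evn (fun j => (j < S m)%nat /\ j <> i)).
  assert (splitQ : forall (R0 : prob Mnat) i, (i < S m)%nat ->
            R0 Bb = R0 (Ai i) + R0 (evn (fun j => j = i))).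
  { intros R0 i hi. apply pr_add; simpl; intros; [lia|]. split; [|lia].
    intro hj. match goal with |- context [?v = i] => destruct (Nat.eq_dec v i); [right|left]; auto end. }
  assert (claim : forall i, (i < S m)%nat -> forall R0, ~ Upd Mnat (singleton Q) (Ai i) R0).
  { intros i hi R0 hR.
    assert (hR' : Upd Mnat (Upd Mnat (singleton P) Bb) (Ai i) R0).
    { rewrite H5. exists Q; split; auto. }
    rewrite H3 in hR'.
    assert (ei : ev_inter Bb (Ai i) = Ai i) by (apply ev_ext; simpl; intros; lia).
    rewrite ei in hR'.
    apply hnx. exists Mnat, P, (Ai i). split; [|eauto].
    pose proof (splitQ P i hi). rewrite Psing in H by lia.
    unfold wt in H. replace (i <=? m)%nat with true in H by (symmetry; apply Nat.leb_le; lia).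
    rewrite PB in H. unfold y in H. assert (P (Ai i) = y - x / mR) by (unfold y; lra).
    rewrite H0; unfold y; field; lra. }
  assert (pig : exists i, (i < S m)%nat /\ Q (evn (fun j => j = i)) <= 1 / (mR + 1)).
  { apply NNPP; intro hn.
    assert (INR (S m) * (1 / (mR + 1)) < sumn (fun j => Q (evn (fun i => i = j))) (S m)).
    { apply sumn_lt_strict; [lia|]. intros j hj. apply Rnot_le_lt; intro hle; apply hn; eauto. }
    rewrite <- prob_below in H. fold Bb in H. rewrite QB in H.
    replace (INR (S m) * (1 / (mR + 1))) with 1 in H by (rewrite S_INR; fold mR; field; lra).
    lra. }
  destruct pig as [i [hi hQi]].
  pose proof (splitQ Q i hi) as sq. rewrite QB in sq.
  assert (big : s < Q (Ai i)).
  { assert (1 - 1 / (mR + 1) <= Q (Ai i)) by lra.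
    assert (s < 1 - 1 / (mR + 1)); [|lra].
    apply (Rmult_lt_reg_r (mR + 1)); [lra|].
    replace ((1 - 1 / (mR + 1)) * (mR + 1)) with mR by (field; lra). lra. }
  pose proof (prob_le1 Mnat Q (Ai i)) as le1.
  destruct (Req_dec (Q (Ai i)) 1) as [e1|n1].
  - apply (claim i hi Q). rewrite (P4' Upd H4 Mnat (singleton Q) (Ai i)); [reflexivity|]. intros P' ->; auto.
  - assert (SQ : Sd Upd (Q (Ai i))).
    { apply NNPP; intro hn. assert (Q (Ai i) <= s); [apply sub; split; [lra|auto]|lra]. }
    destruct SQ as [M1 [P1 [B1 [h1 hQ1]]]].
    destruct (transfer Upd H2 M1 P1 B1 Mnat Q (Ai i) ltac:(lra) ltac:(lra) hQ1) as [R0 hR0].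
    exact (claim i hi R0 hR0).
Qed.

Theorem proposition4p5 (Upd : upd_family) :
  is_update_family Upd ->
  P1 Upd -> P2 Upd -> P3 Upd -> P4 Upd -> P5 Upd ->
  (exists (M : mspace) (P : prob M) (B : event M),
      P B <> 0 /\ Upd M (singleton P) B = emptyset) ->
  forall (M : mspace) (X : set (prob M)) (B : event M),
    Upd M X B = Upd_constrain M X B.
Proof.
  intros His H1 H2 H3 H4 H5 [M0 [P0 [B0 [hne hemp]]]].
  assert (ha : 0 < P0 B0 < 1 /\ ~ Sd Upd (P0 B0)).
  { pose proof (pr_nonneg M0 P0 B0). pose proof (prob_le1 M0 P0 B0).
    assert (hnS : ~ Sd Upd (P0 B0)).
    { intros [M1 [P1 [B1 [h1 hQ1]]]].
      destruct (Req_dec (P1 B1) 1) as [e|e].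
      - rewrite (P4' Upd H4 M0 (singleton P0) B0) in hemp.
        + pose proof (f_equal (fun S => S P0) hemp) as hh; simpl in hh. unfold singleton, emptyset in hh. rewrite <- hh; reflexivity.
        + intros P' ->; lra.
      - pose proof (pr_nonneg M1 P1 B1). pose proof (prob_le1 M1 P1 B1).
        destruct (transfer Upd H2 M1 P1 B1 M0 P0 B0 ltac:(lra) ltac:(lra) hQ1) as [Q hQ].
        rewrite hemp in hQ; exact hQ. }
    split; auto. split; [lra|].
    destruct (Req_dec (P0 B0) 1) as [e|e]; [|lra]. exfalso.
    rewrite (P4' Upd H4 M0 (singleton P0) B0) in hemp.
    + pose proof (f_equal (fun S => S P0) hemp) as hh; simpl in hh. unfold singleton, emptyset in hh. rewrite <- hh; reflexivity.
    + intros P' ->; lra. }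
  assert (K : forall M (P : prob M) B, 0 < P B < 1 -> Upd M (singleton P) B = emptyset).
  { intros M P B hP. apply setext; intro Q; split; [intro hQ|intros []].
    apply (keylemma Upd His H1 H2 H3 H4 H5 (P0 B0) ha (P B) hP).
    exists M, P, B; eauto. }
  intros M X B. rewrite H5. apply setext; intro Q; unfold Upd_constrain; split.
  - intros [P [hX hU]].
    pose proof (pr_nonneg M P B). pose proof (prob_le1 M P B).
    destruct (Req_dec (P B) 0) as [e0|e0].
    + rewrite (His M (singleton P) B) in hU; [destruct hU|]. intros P' ->; auto.
    + destruct (Req_dec (P B) 1) as [e1|e1].
      * rewrite (P4' Upd H4 M (singleton P) B) in hU; [|intros P' ->; auto].
        unfold singleton in hU; subst; auto.
      * rewrite K in hU; [destruct hU|lra].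
  - intros [hX hB]. exists Q; split; auto.
    rewrite (P4' Upd H4 M (singleton Q) B); [reflexivity|]. intros P' ->; auto.
Qed.
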